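(* Let $W$ be a complex vector space of complex dimension $m \geq 2$ and $G=\mathrm{SL}(W,\mathbb{C})$. Let $f:W \to \mathbb{R}$ be a continuous function such that for each $g \in G$ the function $f \circ g-f$ is a (real) linear function on $W$. Then $f$ is affine. *)

(* Defs.v *)
From mathcomp Require Import all_boot all_order all_algebra.
From mathcomp Require Import all_classical all_reals all_analysis.
From mathcomp Require Export complex.
Import Order.TTheory GRing.Theory Num.Theory.
Import numFieldNormedType.Exports.

Set Implicit Arguments.
Unset Strict Implicit.
Unset Printing Implicit Defensive.

Local Open Scope ring_scope.
Local Open Scope complex_scope.

Definition ofRR {R : realType} {m : nat} (p : 'cV[R]_m * 'cV[R]_m) : 'cV[R[i]]_m :=
  \col_(k < m) ((p.1 k 0) +i* (p.2 k 0)).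

(* Continuity of a real-valued function on C^m for the standard (Euclidean)
   topology, i.e. the topology of the underlying real space R^(2m). *)
Definition continuousCm {R : realType} {m : nat} (f : 'cV[R[i]]_m -> R) : Prop :=
  continuous (fun p : 'cV[R]_m * 'cV[R]_m => f (ofRR p)).

Definition Rlinear {R : realType} {m : nat} (L : 'cV[R[i]]_m -> R) : Prop :=
  (forall v w, L (v + w) = L v + L w) /\
  (forall (r : R) v, L ((r%:C)%C *: v) = r * L v).

Definition Raffine {R : realType} {m : nat} (f : 'cV[R[i]]_m -> R) : Prop :=
  exists (L : 'cV[R[i]]_m -> R) (c : R), Rlinear L /\ forall w, f w = L w + c.

Definition inSL {R : realType} {m : nat} (g : 'M[R[i]]_m) : Prop := \det g = 1.

(* Main.v *)
Require Import Defs.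
From mathcomp Require Import all_boot all_order all_algebra.
From mathcomp Require Import all_classical all_reals all_analysis.
From mathcomp Require Import complex.
From mathcomp Require Import lra.
Import Order.TTheory GRing.Theory Num.Theory.
Import numFieldNormedType.Exports.
Local Open Scope ring_scope.
Local Open Scope classical_set_scope.
Local Open Scope complex_scope.

Lemma ofRR_scale (R : realType) m (v : 'cV[R[i]]_m) (t : R) :
  ofRR (t *: (\col_i complex.Re (v i 0)), t *: (\col_i complex.Im (v i 0)))
  = (t%:C)%C *: v.
Proof.
apply/matrixP => i j; rewrite !mxE /= (ord1 j).
case: (v i 0) => a b /=.
by rewrite /GRing.mul /= !mul0r subr0 addr0.
Qed.

Lemma cvg_line (R : realType) m (f : 'cV[R[i]]_m -> R) (hf : continuousCm f)
  (v : 'cV[R[i]]_m) :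
  (fun t : R => f ((t%:C)%C *: v)) @ (0:R)^' --> f 0.
Proof.
set p1 := \col_i complex.Re (v i 0).
set p2 := \col_i complex.Im (v i 0).
have -> : (fun t : R => f ((t%:C)%C *: v)) =
   (fun p => f (ofRR p)) \o (fun t : R => (t *: p1, t *: p2)).
  by apply: funext => t /=; rewrite ofRR_scale.
have -> : f 0 = f (ofRR ((0:R) *: p1, (0:R) *: p2)).
  by rewrite ofRR_scale scale0r.
apply: cvg_within_filter.
apply: cvg_comp; last by apply: hf.
apply: (@cvg_pair _ _ _ (nbhs (0:R)) (nbhs ((0:R) *: p1)) (nbhs ((0:R) *: p2))).
  by apply: continuousZr_tmp; apply: cvg_id.
by apply: continuousZr_tmp; apply: cvg_id.
Qed.

Lemma const_lim (R : realType) (phi : R -> R) (C l : R) :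
  phi @ (0:R)^' --> l -> (forall t, t != 0 -> phi t = C) -> C = l.
Proof.
move=> hl hC.
have hC' : (fun _ : R => C) @ (0:R)^' --> l.
  apply: cvg_trans hl; apply: near_eq_cvg.
  by near=> t; rewrite hC //; near: t; exact: nbhs_dnbhs_neq.
apply: (norm_cvg_unique (F := (fun _ : R => C) @ (0:R)^')) => //.
exact: cvg_cst.
Unshelve. all: by end_near.
Qed.

Definition dcontr {R : realType} {n} (k : 'I_n.+2) (t : R) : 'M[R[i]]_n.+2 :=
  diag_mx (\row_j (if j == k then (((t%:C)%C)^+ n.+1)^-1 else (t%:C)%C)).

Lemma dcontr_SL (R : realType) n (k : 'I_n.+2) (t : R) :
  t != 0 -> inSL (dcontr k t).
Proof.
move=> t0; rewrite /inSL /dcontr det_diag (bigD1 k) //= mxE eqxx.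
have -> : \prod_(j < n.+2 | j != k) (\row_j0 (if j0 == k then (((t%:C)%C)^+ n.+1)^-1 else (t%:C)%C)) 0 j
   = \prod_(j in predC1 k) (t%:C)%C.
  by apply: eq_big => // j /= hj; rewrite mxE (negbTE hj).
rewrite prodr_const cardC1 card_ord /= mulVf //.
by rewrite expf_neq0 // eq_complex /= negb_and t0.
Qed.

Lemma dcontr_act (R : realType) n (k : 'I_n.+2) (t : R) (w : 'cV[R[i]]_n.+2) :
  w k 0 = 0 -> dcontr k t *m w = (t%:C)%C *: w.
Proof.
move=> wk; apply/matrixP => i j; rewrite mul_diag_mx !mxE (ord1 j).
by case: eqP => [->|_]; rewrite ?wk ?mulr0.
Qed.

Lemma contr_add (R : realType) n (f : 'cV[R[i]]_n.+2 -> R) (hf : continuousCm f)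
  (hG : forall g : 'M[R[i]]_n.+2, inSL g ->
          Rlinear (fun w : 'cV[R[i]]_n.+2 => f (g *m w) - f w))
  (k : 'I_n.+2) (w w' : 'cV[R[i]]_n.+2) :
  w k 0 = 0 -> w' k 0 = 0 -> f (w + w') = f w + f w' - f 0.
Proof.
move=> wk w'k.
suff : f (w + w') - f w - f w' = f 0 - f 0 - f 0 by move=> h; lra.
apply: (@const_lim R (fun t : R => f ((t%:C)%C *: (w + w'))
   - f ((t%:C)%C *: w) - f ((t%:C)%C *: w'))).
  by apply: cvgB; [apply: cvgB|]; apply: cvg_line.
move=> t t0; have [hA _] := hG _ (@dcontr_SL R n k t t0).
have e1 := hA w w'.
have ww'k : (w + w') k 0 = 0 by rewrite mxE wk w'k addr0.
rewrite !dcontr_act // in e1.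
lra.
Qed.

Lemma contr_hom (R : realType) n (f : 'cV[R[i]]_n.+2 -> R) (hf : continuousCm f)
  (hG : forall g : 'M[R[i]]_n.+2, inSL g ->
          Rlinear (fun w : 'cV[R[i]]_n.+2 => f (g *m w) - f w))
  (k : 'I_n.+2) (r : R) (w : 'cV[R[i]]_n.+2) :
  w k 0 = 0 -> f ((r%:C)%C *: w) = r * f w + (1 - r) * f 0.
Proof.
move=> wk.
suff : f ((r%:C)%C *: w) - r * f w = f 0 - r * f 0 by move=> h; lra.
apply: (@const_lim R (fun t : R => f ((t%:C)%C *: ((r%:C)%C *: w))
   - r * f ((t%:C)%C *: w))).
  by apply: cvgB; [apply: cvg_line| apply: cvgMr; apply: cvg_line].
move=> t t0; have [hA hH] := hG _ (@dcontr_SL R n k t t0).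
have e1 := hH r w.
have rwk : ((r%:C)%C *: w) k 0 = 0 by rewrite mxE wk mulr0.
rewrite !dcontr_act // in e1.
lra.
Qed.

Set Implicit Arguments.
Unset Strict Implicit.

Definition Zv {R : realType} {n} (v : 'cV[R[i]]_n) := exists k, v k 0 = 0.
Definition ev {R : realType} {n} (k : 'I_n) : 'cV[R[i]]_n := delta_mx k 0.
Definition oth {n} (k : 'I_n.+2) : 'I_n.+2 := if k == ord0 then ord_max else ord0.

Lemma oth_neq n (k : 'I_n.+2) : oth k != k.
Proof.
rewrite /oth; case: (k =P ord0) => [->|/eqP h]; last by rewrite eq_sym.
by apply/eqP => /(congr1 val).
Qed.

Lemma Rlin0 (R : realType) m (L : 'cV[R[i]]_m -> R) : Rlinear L -> L 0 = 0.
Proof. by case=> hA _; have := hA 0 0; rewrite addr0 => /eqP; rewrite addrC -subr_eq subrr eq_sym => /eqP. Qed.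

Lemma Rlin_sum (R : realType) m (L : 'cV[R[i]]_m -> R) (I : finType) (F : I -> 'cV[R[i]]_m) :
  Rlinear L -> L (\sum_i F i) = \sum_i L (F i).
Proof.
move=> hL; have h0 := Rlin0 hL; case: hL => hA _.
by apply: (big_morph L hA h0).
Qed.

Lemma decomp (R : realType) m (v : 'cV[R[i]]_m) :
  v = \sum_k (((complex.Re (v k 0))%:C *: ev k) + ((complex.Im (v k 0))%:C *: ('i *: ev k))).
Proof.
rewrite {1}(matrix_sum_delta v); apply: eq_bigr => k _.
rewrite big_ord1 {1}(complexE (v k 0)) scalerDl scalerA /ev.
by rewrite [_ * 'i]mulrC.
Qed.

Lemma Rlin_zero (R : realType) m (L : 'cV[R[i]]_m -> R) : Rlinear L ->
  (forall k, L (ev k) = 0) -> (forall k, L ('i *: ev k) = 0) -> forall v, L v = 0.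
Proof.
move=> hL h1 h2 v; rewrite (decomp v) Rlin_sum //; apply: big1 => k _.
case: hL => hA hH; rewrite hA !hH h1 h2; lra.
Qed.

Lemma ZvZ (R : realType) m (c : R[i]) (v : 'cV[R[i]]_m) : Zv v -> Zv (c *: v).
Proof. by case=> k hk; exists k; rewrite mxE hk mulr0. Qed.

Lemma Zv_ev (R : realType) n (k : 'I_n.+2) : Zv (ev k : 'cV[R[i]]_n.+2).
Proof. by exists (oth k); rewrite mxE eqxx andbT (negbTE (oth_neq k)). Qed.

Lemma cols_inv (R : realType) n (E : 'cV[R[i]]_n.+2 -> R)
  (hE : forall g : 'M[R[i]]_n.+2, inSL g -> Rlinear (fun w => E (g *m w) - E w))
  (hZ : forall v, Zv v -> E v = 0) (g : 'M[R[i]]_n.+2) :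
  inSL g -> (forall k, Zv (g *m ev k)) -> forall v, E (g *m v) = E v.
Proof.
move=> hg hc v; apply/eqP; rewrite -subr_eq0; apply/eqP.
apply: (Rlin_zero (hE g hg)) => k /=.
  by rewrite (hZ _ (hc k)) (hZ _ (Zv_ev R k)) subrr.
rewrite -scalemxAr (hZ _ (ZvZ _ (hc k))) (hZ _ (ZvZ _ (Zv_ev R k))).
by rewrite subrr.
Qed.

From mathcomp Require Import fingroup perm.

Definition uP {R : realType} {n} (P : R[i]) : 'cV[R[i]]_n.+2 :=
  \col_i (if i == ord_max then P else 1).

Lemma normalize (R : realType) n (E : 'cV[R[i]]_n.+2 -> R)
  (hE : forall g : 'M[R[i]]_n.+2, inSL g -> Rlinear (fun w => E (g *m w) - E w))
  (hZ : forall v, Zv v -> E v = 0) (w : 'cV[R[i]]_n.+2) :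
  (forall k, w k 0 != 0) -> E w = E (uP (\prod_k w k 0)).
Proof.
move=> hw.
pose d := \row_j (if j == ord_max then \prod_(k | k != ord_max) w k 0 else (w j 0)^-1)
  : 'rV[R[i]]_n.+2.
have hg : inSL (diag_mx d).
  rewrite /inSL det_diag (bigD1 ord_max) //= mxE eqxx.
  rewrite [X in _ * X](eq_bigr (fun j => (w j 0)^-1)); last by move=> j hj /=; rewrite /d mxE (negbTE hj).
  rewrite -big_split /=; apply: big1 => j _; exact: mulfV.
have -> : uP (\prod_k w k 0) = diag_mx d *m w.
  apply/matrixP => i j; rewrite mul_diag_mx /d !mxE (ord1 j).
  case: eqP => [->|_]; last by rewrite mulVf.
  by rewrite [LHS](bigD1 ord_max) //= mulrC.
symmetry; apply: (cols_inv hE hZ hg) => k.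
exists (oth k); rewrite mul_diag_mx !mxE eqxx andbT (negbTE (oth_neq k)).
by rewrite mulr0.
Qed.

Lemma delta_mulv (R : realType) n (a b : 'I_n) (v : 'cV[R[i]]_n) :
  delta_mx a b *m v = v b 0 *: ev a.
Proof.
apply/matrixP => i j; rewrite !mxE (ord1 j) (bigD1 b) //= big1.
  by rewrite !mxE eqxx andbT addr0; case: (i == a); rewrite ?mulr1 ?mul1r ?mulr0 ?mul0r.
by move=> k hk; rewrite mxE (negbTE hk) andbF mul0r.
Qed.

Definition Tr {R : realType} {n} (s : R[i]) : 'M[R[i]]_n.+2 :=
  1%:M + s *: delta_mx ord_max ord0.

Lemma Tr_SL (R : realType) n (s : R[i]) : inSL (Tr s : 'M[R[i]]_n.+2).
Proof.
have hab : (ord_max : 'I_n.+2) != ord0 by [].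
rewrite /inSL det_trig.
  apply: big1 => i _; rewrite !mxE eqxx mulr1n.
  case: (i =P ord_max) => [->|]; first by rewrite (negbTE hab) andbF mulr0 addr0.
  by rewrite mulr0 addr0.
apply/forallP => i; apply/forallP => j; apply/implyP => hij.
rewrite !mxE.
have -> : (i == j) = false by apply/negbTE; rewrite neq_ltn hij.
have -> : (j == ord0) = false.
  by apply/negbTE; apply/eqP => hj; move: hij; rewrite hj.
by rewrite andbF mulr0 addr0.
Qed.

Lemma Tr_act (R : realType) n (s : R[i]) (v : 'cV[R[i]]_n.+2) :
  Tr s *m v = v + (s * v ord0 0) *: ev ord_max.
Proof. by rewrite /Tr mulmxDl mul1mx -scalemxAl delta_mulv scalerA. Qed.

Lemma uP_split (R : realType) n (P : R[i]) :
  (uP P : 'cV[R[i]]_n.+2) = uP 0 + P *: ev ord_max.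
Proof.
apply/matrixP => i j; rewrite !mxE (ord1 j) eqxx andbT.
by case: (i == ord_max); rewrite ?mulr1 ?mulr0 ?add0r ?addr0.
Qed.

Lemma uP_addev (R : realType) n (P s : R[i]) :
  (uP P : 'cV[R[i]]_n.+2) + s *: ev ord_max = uP (P + s).
Proof.
apply/matrixP => i j; rewrite !mxE (ord1 j) eqxx andbT.
by case: (i == ord_max); rewrite ?mulr1 ?mulr0 ?addr0.
Qed.

Lemma uP0 (R : realType) n : Zv (uP 0 : 'cV[R[i]]_n.+2).
Proof. by exists ord_max; rewrite mxE eqxx. Qed.

Lemma psi_add (R : realType) n (E : 'cV[R[i]]_n.+2 -> R)
  (hE : forall g : 'M[R[i]]_n.+2, inSL g -> Rlinear (fun w => E (g *m w) - E w))
  (hZ : forall v, Zv v -> E v = 0) (P s : R[i]) :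
  E (uP (P + s)) = E (uP P) + E (uP s).
Proof.
have [hA _] := hE _ (@Tr_SL R n s).
have e0 : (uP 0 : 'cV[R[i]]_n.+2) ord0 0 = 1 by rewrite mxE.
have h1 := hA (uP 0) (P *: ev ord_max).
rewrite -uP_split !Tr_act in h1.
have e1 : (uP P : 'cV[R[i]]_n.+2) ord0 0 = 1 by rewrite mxE.
have e2 : (P *: ev ord_max : 'cV[R[i]]_n.+2) ord0 0 = 0 by rewrite !mxE mulr0.
rewrite e0 e1 e2 !mulr1 mulr0 scale0r addr0 subrr addr0 !uP_addev add0r in h1.
rewrite (hZ _ (@uP0 R n)) subr0 in h1.
lra.
Qed.

Definition Jm {R : realType} {n} : 'M[R[i]]_n.+2 :=
  diag_mx (\row_j (if j == ord0 then -1 else 1)) *m perm_mx (perm.tperm ord_max ord0).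

Lemma Jm_SL (R : realType) n : inSL (@Jm R n).
Proof.
rewrite /inSL /Jm det_mulmx det_perm perm.odd_tperm det_diag (bigD1 ord0) //= mxE eqxx.
rewrite big1 => [|j hj]; last by rewrite mxE (negbTE hj).
by rewrite mulr1 /= expr1 mulrNN mulr1.
Qed.

Lemma Jm_act (R : realType) n (v : 'cV[R[i]]_n.+2) i :
  (@Jm R n *m v) i 0 = (if i == ord0 then -1 else 1) * v (perm.tperm ord_max ord0 i) 0.
Proof. by rewrite /Jm -mulmxA -row_permE mul_diag_mx !mxE. Qed.

Lemma psi_even (R : realType) n (E : 'cV[R[i]]_n.+2 -> R)
  (hE : forall g : 'M[R[i]]_n.+2, inSL g -> Rlinear (fun w => E (g *m w) - E w))
  (hZ : forall v, Zv v -> E v = 0) (P : R[i]) :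
  E (uP (- P)) = E (uP P).
Proof.
have [->|hP] := eqVneq P 0; first by rewrite oppr0.
have hc : forall k, Zv (@Jm R n *m ev k).
  move=> k; exists (perm.tperm ord_max ord0 (oth k)).
  by rewrite Jm_act perm.tpermK !mxE (negbTE (oth_neq k)) mulr0.
rewrite -(cols_inv hE hZ (@Jm_SL R n) hc (uP P)).
rewrite [RHS](normalize hE hZ); last first.
  move=> k; rewrite Jm_act !mxE mulf_neq0 //.
    by case: (k == ord0); rewrite ?oppr_eq0 oner_eq0.
  by case: (_ == ord_max).
congr (E (uP _)).
under eq_bigr do rewrite Jm_act.
rewrite big_split /=.
rewrite [X in _ * X](reindex_inj (@perm.perm_inj _ (perm.tperm ord_max ord0))) /=.
rewrite [X in _ * X](eq_bigr (fun i => uP P i 0)); last by move=> i _; rewrite tpermK.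
rewrite [X in X * _](bigD1 ord0) //= ?eqxx big1 => [|j hj]; last by rewrite (negbTE hj).
rewrite (bigD1 ord_max) //= big1 => [|j hj]; last by rewrite mxE (negbTE hj).
by rewrite mxE eqxx !mulr1 mulN1r.
Qed.

Lemma group_stage (R : realType) n (E : 'cV[R[i]]_n.+2 -> R)
  (hE : forall g : 'M[R[i]]_n.+2, inSL g -> Rlinear (fun w => E (g *m w) - E w))
  (hZ : forall v, Zv v -> E v = 0) (v : 'cV[R[i]]_n.+2) : E v = 0.
Proof.
have hpsi : forall P : R[i], E (uP P) = 0.
  move=> P; have h1 := psi_add hE hZ P (- P).
  rewrite psi_even // subrr (hZ _ (@uP0 R n)) in h1; lra.
have [hz|hnz] := pselect (exists k, v k 0 = 0); first exact: hZ.
rewrite (normalize hE hZ) ?hpsi // => k; apply/eqP => hk; apply: hnz; by exists k.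
Qed.

Lemma main2 (R : realType) n (f : 'cV[R[i]]_n.+2 -> R) (hf : continuousCm f)
  (hG : forall g : 'M[R[i]]_n.+2, inSL g ->
          Rlinear (fun w : 'cV[R[i]]_n.+2 => f (g *m w) - f w)) :
  Raffine f.
Proof.
pose F w := f w - f 0.
have hadd : forall (k : 'I_n.+2) (w w' : 'cV[R[i]]_n.+2), w k 0 = 0 -> w' k 0 = 0 -> F (w + w') = F w + F w'.
  move=> k w w' h1 h2; rewrite /F (@contr_add R n f hf hG k w w' h1 h2); lra.
have hhom : forall (k : 'I_n.+2) (r : R) (w : 'cV[R[i]]_n.+2), w k 0 = 0 -> F ((r%:C)%C *: w) = r * F w.
  move=> k r w h; rewrite /F (@contr_hom R n f hf hG k r w h); lra.
have evo : forall (z : R[i]) k, (z *: ev k : 'cV[R[i]]_n.+2) (oth k) 0 = 0.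
  by move=> z k; rewrite !mxE (negbTE (oth_neq k)) mulr0.
pose Phi (w : 'cV[R[i]]_n.+2) := \sum_k F (w k 0 *: ev k).
have hPhi : Rlinear Phi.
  split.
    move=> v w; rewrite /Phi -big_split /=; apply: eq_bigr => k _.
    by rewrite mxE scalerDl (hadd (oth k)).
  move=> r v; rewrite /Phi mulr_sumr; apply: eq_bigr => k _.
  by rewrite mxE -scalerA (hhom (oth k)).
have hFZ : forall v, Zv v -> F v = Phi v.
  move=> v [k0 hk0].
  have -> : F v = F (\sum_k v k 0 *: ev k).
    by congr F; rewrite {1}(matrix_sum_delta v); apply: eq_bigr => k _; rewrite big_ord1.
  rewrite /Phi.
  pose K (x : 'cV[R[i]]_n.+2) (y : R) := x k0 0 = 0 /\ F x = y.
  suff [] : K (\sum_k v k 0 *: ev k) (\sum_k F (v k 0 *: ev k)) by [].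
  apply: (big_rec2 K).
    by split; rewrite ?mxE // /F subrr.
  move=> k x y _ [hx <-]; split.
    rewrite !mxE hx addr0; case: (k0 =P k) => [<-|_]; by rewrite ?hk0 ?mul0r ?mulr0.
  apply: (hadd k0) => //; rewrite !mxE; case: (k0 =P k) => [<-|_]; by rewrite ?hk0 ?mul0r ?mulr0.
pose E w := F w - Phi w.
have hE : forall g : 'M[R[i]]_n.+2, inSL g -> Rlinear (fun w => E (g *m w) - E w).
  move=> g hg; have [hA hH] := hG g hg; case: hPhi => pA pH; split.
    move=> v w; rewrite /E /F mulmxDr !pA.
    have := hA v w; rewrite mulmxDr; lra.
  move=> r v; rewrite /E /F -scalemxAr !pH.
  have := hH r v; rewrite -scalemxAr; lra.
have hZ : forall v, Zv v -> E v = 0 by move=> v hv; rewrite /E hFZ // subrr.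
exists Phi, (f 0); split => // w.
have := group_stage hE hZ w; rewrite /E /F; lra.
Qed.

Local Close Scope complex_scope.
Local Close Scope classical_set_scope.

Theorem lemma3p1 (R : realType) (m : nat) (hm : (2 <= m)%N)
  (f : 'cV[R[i]]_m -> R) (hf : continuousCm f)
  (hG : forall g : 'M[R[i]]_m, inSL g ->
          Rlinear (fun w : 'cV[R[i]]_m => f (g *m w) - f w)) :
  Raffine f.
Proof.
move: f hf hG; case: m hm => [|[|n]] // _ f hf hG.
exact: main2 hf hG.
Qed.
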